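(* Let $q=p^f$ with $p$ prime, and let $R=\mathbb F_{q^2}+\mathbb F_{q^2}u$ with $u^2=0$ and $ua=a^qu$ for $a\in\mathbb F_{q^2}$. Let $\rho=(R,R,\beta,\Phi)$ with $\beta$ and $\Phi$ as defined below. Then $\rho$ is a form ring (with $\beta$ admissible, associated anti-automorphism $(r+su)^J=r-s^qu$ and $\beta(v,w)=\beta(w,-v)$), and a left $R$-submodule $C\le R^N$ is a code of Type $\rho$ if and only if $C=C^{\perp_H}$, where $C^{\perp_H}=\{x\in R^N:\sum_{i=1}^N x_i\overline{c_i}=0\ \forall c\in C\}$ and $\overline{a+bu}:=a^q-bu$.
   Context: $\beta:R\times R\to\tfrac1p\mathbb Z/\mathbb Z$, $\beta(a'+b'u,a+bu):=\tfrac1p\mathrm{Tr}(ab'-a'b)$ with $\mathrm{Tr}$ the trace $\mathbb F_{q^2}\to\mathbb F_p\cong\mathbb Z/p\mathbb Z$. $\phi_0:R\to\tfrac1p\mathbb Z/\mathbb Z$, $\phi_0(a+bu):=\tfrac1p\mathrm{Tr}_{\mathbb F_q/\mathbb F_p}(a\,a^q)$, and $\Phi$ is the subgroup of maps $R\to\mathbb Q/\mathbb Z$ generated by $\{\phi_0[r]:r\in R\}$, where $(\phi[r])(v)=\phi(rv)$. General definitions: for a finite ring $R$ and finite left module $V$, $\beta:V\times V\to\mathbb Q/\mathbb Z$ biadditive is admissible if $v\mapsto\beta(v,\cdot)$ is an isomorphism $V\to\mathrm{Hom}(V,\mathbb Q/\mathbb Z)$, the set $M=\{\beta_r:r\in R\}$,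 $\beta_r(v,w)=\beta(v,rw)$, is closed under $\beta\mapsto\beta^\tau$, $\beta^\tau(v,w)=\beta(w,v)$, and $r\mapsto\beta_r$ is bijective; $J$ is defined by $\beta(rv,w)=\beta(v,r^Jw)$. $\mathrm{Quad}_0(V,\mathbb Q/\mathbb Z)$ is the group of maps $\phi$ with $\phi(0)=0$ and $\phi(x+y+z)-\phi(x+y)-\phi(x+z)-\phi(y+z)+\phi(x)+\phi(y)+\phi(z)=0$; $\{\!\{\beta\}\!\}(v)=\beta(v,v)$, $\lambda(\phi)(v,w)=\phi(v+w)-\phi(v)-\phi(w)$. A form ring is $(R,V,\beta,\Phi)$ with $\beta$ admissible and $\Phi\le\mathrm{Quad}_0$ a subgroup closed under all $\phi\mapsto\phi[r]$, with $\{\!\{M\}\!\}\subseteq\Phi$ and $\lambda(\Phi)\subseteq M$. A code of Type $\rho$ is a left submodule $C\le V^N$ with $C=\{x:\sum_i\beta(x_i,c_i)=0\ \forall c\in C\}$ and $\sum_i\phi(c_i)=0$ for all $c\in C,\phi\in\Phi$. *)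

(* Defs.v *)
From HB Require Import structures.
From mathcomp Require Import all_boot all_order all_algebra.
From mathcomp Require Import ring.
Set Implicit Arguments. Unset Strict Implicit. Unset Printing Implicit Defensive.
Import Order.TTheory GRing.Theory Num.Theory.
Local Open Scope ring_scope.

(* Q/Z is represented by rat modulo Z: a value in Q/Z is given by any   *)
(* rational representative, and equality in Q/Z is congruence mod Z.    *)
Definition eqQZ (x y : rat) : Prop := (x - y) \is a Num.int.
Notation "x =QZ y" := (eqQZ x y) (at level 70, no associativity).

Section General.
Variables (R : nzRingType) (V : lmodType R).

Definition biadditive (beta : V -> V -> rat) : Prop :=
  (forall v v' w, beta (v + v') w =QZ beta v w + beta v' w) /\
  (forall v w w', beta v (w + w') =QZ beta v w + beta v w').

Definition homQZ (g : V -> rat) : Prop :=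
  forall v w, g (v + w) =QZ g v + g w.

Definition beta_r (beta : V -> V -> rat) (r : R) : V -> V -> rat :=
  fun v w => beta v (r *: w).

Definition admissible (beta : V -> V -> rat) : Prop :=
  biadditive beta /\
  (* v |-> beta(v,.) is an isomorphism V -> Hom(V,Q/Z) *)
  (forall v v', (forall w, beta v w =QZ beta v' w) -> v = v') /\
  (forall g, homQZ g -> exists v, forall w, beta v w =QZ g w) /\
  (* M = {beta_r} is closed under transposition *)
  (forall r, exists s, forall v w, beta_r beta r w v =QZ beta_r beta s v w) /\
  (* r |-> beta_r is injective (hence bijective onto M) *)
  (forall r s, (forall v w, beta_r beta r v w =QZ beta_r beta s v w) -> r = s).

Definition is_J (beta : V -> V -> rat) (J : R -> R) : Prop :=
  forall r v w, beta (r *: v) w =QZ beta v (J r *: w).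

Definition Quad0 (phi : V -> rat) : Prop :=
  phi 0 =QZ 0 /\
  forall x y z, phi (x + y + z) - phi (x + y) - phi (x + z) - phi (y + z)
                + phi x + phi y + phi z =QZ 0.

Definition diag_form (beta : V -> V -> rat) : V -> rat := fun v => beta v v.

Definition lambdaQ (phi : V -> rat) : V -> V -> rat :=
  fun v w => phi (v + w) - phi v - phi w.

Definition shiftQ (phi : V -> rat) (r : R) : V -> rat := fun v => phi (r *: v).

(* A form ring (R, V, beta, Phi); Phi is a set of maps V -> Q/Z, encoded as
   a predicate on rational-valued maps that respects equality in Q/Z. *)
Definition form_ring (beta : V -> V -> rat) (Phi : (V -> rat) -> Prop) : Prop :=
  admissible beta /\
  (forall phi psi, (forall v, phi v =QZ psi v) -> Phi phi -> Phi psi) /\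
  (* Phi is a subgroup of Quad_0(V, Q/Z) *)
  Phi (fun _ => 0) /\
  (forall phi psi, Phi phi -> Phi psi -> Phi (fun v => phi v - psi v)) /\
  (forall phi, Phi phi -> Quad0 phi) /\
  (forall phi r, Phi phi -> Phi (shiftQ phi r)) /\
  (forall r, Phi (diag_form (beta_r beta r))) /\
  (forall phi, Phi phi -> exists r, forall v w, lambdaQ phi v w =QZ beta_r beta r v w).

Definition left_submodule (N : nat) (C : {ffun 'I_N -> V} -> Prop) : Prop :=
  C [ffun _ => 0] /\
  (forall x y, C x -> C y -> C [ffun i => x i - y i]) /\
  (forall (r : R) x, C x -> C [ffun i => r *: x i]).

Definition code_of_type (beta : V -> V -> rat) (Phi : (V -> rat) -> Prop)
  (N : nat) (C : {ffun 'I_N -> V} -> Prop) : Prop :=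
  left_submodule C /\
  (forall x, C x <-> (forall c, C c -> \sum_(i < N) beta (x i) (c i) =QZ 0)) /\
  (forall c phi, C c -> Phi phi -> \sum_(i < N) phi (c i) =QZ 0).

End General.

(* The ring F + F u with u^2 = 0 and u a = (s a) u, s a ring morphism   *)
(* of F.  An element (a, b) stands for a + b u.                         *)
Definition skew (F : fieldType) (s : {rmorphism F -> F}) : Type := (F * F)%type.

Section Skew.
Variables (F : fieldType) (s : {rmorphism F -> F}).
Local Notation skew := (skew s).
HB.instance Definition _ := GRing.Zmodule.on skew.

Definition skew_one : skew := (1, 0).
Definition skew_mul (x y : skew) : skew :=
  (x.1 * y.1, x.1 * y.2 + x.2 * s y.1).

Lemma skew_mulA : associative skew_mul.
Proof.
move=> [a b] [c d] [e g]; rewrite /skew_mul /= rmorphM.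
congr pair; first exact: mulrA.
by rewrite mulrDr mulrDl !mulrA !addrA.
Qed.
Lemma skew_mul1r : left_id skew_one skew_mul.
Proof. by move=> [a b]; rewrite /skew_mul /= mul1r mul0r addr0 mul1r. Qed.
Lemma skew_mulr1 : right_id skew_one skew_mul.
Proof. by move=> [a b]; rewrite /skew_mul /= mulr1 mulr0 rmorph1 mulr1 add0r. Qed.
Lemma skew_mulDl : left_distributive skew_mul +%R.
Proof.
move=> [a b] [c d] [e g]; rewrite /skew_mul /=; congr pair; first exact: mulrDl.
by rewrite !mulrDl -!addrA; congr (_ + _); rewrite !addrA; congr (_ + _); rewrite addrC.
Qed.
Lemma skew_mulDr : right_distributive skew_mul +%R.
Proof.
move=> [a b] [c d] [e g]; rewrite /skew_mul /= rmorphD; congr pair; first exact: mulrDr.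
by rewrite !mulrDr -!addrA; congr (_ + _); rewrite !addrA; congr (_ + _); rewrite addrC.
Qed.
Lemma skew_oner_neq0 : skew_one != 0.
Proof. by apply/negP => /eqP [] /eqP; rewrite oner_eq0. Qed.

HB.instance Definition _ := GRing.Zmodule_isNzRing.Build skew
  skew_mulA skew_mul1r skew_mulr1 skew_mulDl skew_mulDr skew_oner_neq0.

Definition skewE (a b : F) : skew := (a, b).
End Skew.

HB.instance Definition _ (F : finFieldType) (s : {rmorphism F -> F}) :=
  Finite.on (skew s).

Section Specific.
Variables (p f : nat) (F : finFieldType) (s : {rmorphism F -> F}).

(* (1/p) x in Q/Z for x in the prime field F_p of F (identified with Z/pZ);
   the representative is k/p with 0 <= k < p and k%:R = x. *)
Definition ofFp (x : F) : rat :=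
  if [pick k : 'I_p | (k%:R : F) == x] is Some k then (k%:Q / p%:Q) else 0.

(* trace F_{q^2} -> F_p, with q = p^f *)
Definition trF (x : F) : F := \sum_(i < 2 * f) x ^+ (p ^ i).
(* trace F_q -> F_p *)
Definition trFq (x : F) : F := \sum_(i < f) x ^+ (p ^ i).

Local Notation R := (skew s).
Local Notation V := (R^o).

Definition beta_rho (v w : V) : rat :=
  ofFp (trF (w.1 * v.2 - v.1 * w.2)).

Definition phi0 (v : V) : rat := ofFp (trFq (v.1 * v.1 ^+ (p ^ f))).

(* Phi = the subgroup generated by the phi_0[r], r in R *)
Definition Phi_rho (phi : V -> rat) : Prop :=
  exists l : seq (R * int),
    forall v, phi v =QZ \sum_(t <- l) (t.2)%:~R * shiftQ phi0 t.1 v.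

Definition J_rho (x : R) : R := (x.1, - x.2 ^+ (p ^ f)).

Definition bar_rho (x : R) : R := (x.1 ^+ (p ^ f), - x.2).

Definition herm_dual (N : nat) (C : {ffun 'I_N -> R} -> Prop)
  (x : {ffun 'I_N -> R}) : Prop :=
  forall c, C c -> \sum_(i < N) x i * bar_rho (c i) = 0.

End Specific.

Notation regskew s := (GRing.regular (skew s)).

(* Main.v *)
Require Import Defs.
From HB Require Import structures.
From mathcomp Require Import all_boot all_order all_algebra.
From mathcomp Require Import finfield ring zify.
Set Implicit Arguments. Unset Strict Implicit. Unset Printing Implicit Defensive.
Import Order.TTheory GRing.Theory Num.Theory.
Local Open Scope ring_scope.

Section QZ.
Lemma eqQZ_refl x : x =QZ x.
Proof. by rewrite /eqQZ subrr. Qed.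
Lemma eqQZ_eq x y : x = y -> x =QZ y.
Proof. by move=> ->; apply: eqQZ_refl. Qed.
Lemma eqQZ_sym x y : x =QZ y -> y =QZ x.
Proof. by rewrite /eqQZ -opprB rpredN. Qed.
Lemma eqQZ_trans x y z : x =QZ y -> y =QZ z -> x =QZ z.
Proof.
rewrite /eqQZ => h1 h2; have := rpredD h1 h2.
by rewrite addrA subrK.
Qed.
Lemma eqQZ_add a b c d : a =QZ b -> c =QZ d -> a + c =QZ b + d.
Proof.
rewrite /eqQZ => h1 h2; have := rpredD h1 h2.
by rewrite opprD addrACA.
Qed.
Lemma eqQZ_opp a b : a =QZ b -> - a =QZ - b.
Proof. by rewrite /eqQZ -opprD rpredN. Qed.
Lemma eqQZ_sub a b c d : a =QZ b -> c =QZ d -> a - c =QZ b - d.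
Proof. by move=> h1 h2; apply: eqQZ_add => //; apply: eqQZ_opp. Qed.
Lemma eqQZ_mulz (k : int) a b : a =QZ b -> k%:~R * a =QZ k%:~R * b.
Proof.
rewrite /eqQZ -mulrBr => h; apply: rpredM => //.
by apply/intrP; exists k.
Qed.
Lemma eqQZ_int a : a \is a Num.int -> a =QZ 0.
Proof. by rewrite /eqQZ subr0. Qed.
Lemma eqQZ_sum (I : Type) (r : seq I) (P : pred I) (g h : I -> rat) :
  (forall i, P i -> g i =QZ h i) ->
  \sum_(i <- r | P i) g i =QZ \sum_(i <- r | P i) h i.
Proof.
move=> gh; elim/big_ind2: _ => //.
all: try (by apply: eqQZ_refl); try (by move=> *; apply: eqQZ_add); auto.
Qed.
End QZ.

Section Main.
Variables (p f : nat) (F : finFieldType) (s : {rmorphism F -> F}).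
Hypotheses (pp : prime p) (fpos : (0 < f)%N) (cardF : #|F| = ((p ^ f) ^ 2)%N)
  (sE : forall x : F, s x = x ^+ (p ^ f)%N).

Lemma pch : p \in [pchar F].
Proof. by apply: (@card_finPcharP F p (f * 2)) => //; rewrite expnM. Qed.

Lemma ssK x : s (s x) = x.
Proof.
rewrite !sE -exprM.
have -> : (p ^ f * p ^ f = #|F|)%N by rewrite cardF expnS expn1.
exact: expf_card.
Qed.

Lemma powp_add i (x y : F) : (x + y) ^+ (p ^ i) = x ^+ (p ^ i) + y ^+ (p ^ i).
Proof. by apply: exprDn_pchar; rewrite pnatX pnatE // pch. Qed.

Lemma powp0 i : (0 : F) ^+ (p ^ i) = 0.
Proof. rewrite expr0n expn_eq0; case: eqP => // p0; by move: pp; rewrite p0. Qed.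

Lemma natr_inj_lt k l : (k < p)%N -> (l < p)%N -> (k%:R : F) = l%:R -> k = l.
Proof.
wlog le: k l / (k <= l)%N.
  move=> W hk hl e; case: (leqP k l) => h; first exact: W.
  by apply/esym/W => //; apply: ltnW.
move=> hk hl e.
have : (p %| l - k)%N by rewrite (dvdn_pcharf pch) natrB // e subrr.
case/dvdnP=> m hm; case: m hm => [|m] hm; lia.
Qed.

Definition Fp (t : F) := exists z : int, t = z%:~R.

Lemma Fp_fix t : t ^+ p = t -> Fp t.
Proof.
move=> ht.
case Hin: (t \in [seq (k%:R : F) | k <- iota 0 p]).
  by case/mapP: Hin => k _ ->; exists k.
exfalso.
have p1 : (1 < p)%N by apply: prime_gt1.
have hP : size ('X^p - 'X : {poly F}) = p.+1.
  by rewrite size_polyDl size_polyXn // size_polyN size_polyX.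
suff: (p.+1 < p.+1)%N by rewrite ltnn.
have := @max_poly_roots F ('X^p - 'X) (t :: [seq (k%:R : F) | k <- iota 0 p]).
rewrite hP /= size_map size_iota; apply.
- by rewrite -size_poly_eq0 hP.
- rewrite /root !hornerE ht subrr eqxx /=.
  apply/allP => y /mapP [k _ ->].
  by rewrite /root !hornerE -(pFrobenius_autE pch) pFrobenius_aut_nat subrr.
- rewrite Hin /= map_inj_in_uniq ?iota_uniq //.
  move=> k l; rewrite !mem_iota /= !add0n; exact: natr_inj_lt.
Qed.

Lemma Fp_add a b : Fp a -> Fp b -> Fp (a + b).
Proof. by move=> [x ->] [y ->]; exists (x + y); rewrite intrD. Qed.
Lemma Fp_opp a : Fp a -> Fp (- a).
Proof. by move=> [x ->]; exists (- x); rewrite intrN. Qed.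
Lemma Fp0 : Fp 0.
Proof. by exists 0. Qed.
Lemma Fp_mul a b : Fp a -> Fp b -> Fp (a * b).
Proof. by move=> [x ->] [y ->]; exists (x * y); rewrite intrM. Qed.
Lemma Fp_sum (I : Type) (r : seq I) (P : pred I) (g : I -> F) :
  (forall i, P i -> Fp (g i)) -> Fp (\sum_(i <- r | P i) g i).
Proof.
move=> h; elim/big_ind: _ => //; [exact: Fp0 | exact: Fp_add].
Qed.

Lemma sum_pow_fix m (x : F) : (0 < m)%N -> x ^+ (p ^ m) = x ->
  (\sum_(i < m) x ^+ (p ^ i)) ^+ p = \sum_(i < m) x ^+ (p ^ i).
Proof.
case: m => // m _ hx.
rewrite -(pFrobenius_autE pch) rmorph_sum /=.
under eq_bigr do rewrite pFrobenius_autE -exprM -expnSr.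
rewrite big_ord_recr big_ord_recl /= hx expn0 expr1 addrC.
by congr (_ + _); apply: eq_bigr => i _.
Qed.

Lemma trF_Fp (x : F) : Fp (trF p f x).
Proof.
apply: Fp_fix; apply: sum_pow_fix; first by rewrite muln_gt0.
by rewrite mulnC expnM -cardF expf_card.
Qed.

Lemma trFq_Fp (z : F) : s z = z -> Fp (trFq p f z).
Proof. by rewrite sE => hz; apply: Fp_fix; apply: sum_pow_fix. Qed.

Lemma trF_add (x y : F) : trF p f (x + y) = trF p f x + trF p f y.
Proof. by rewrite /trF -big_split; apply: eq_bigr => i _; apply: powp_add. Qed.
Lemma trF0 : trF p f (0 : F) = 0.
Proof. by rewrite /trF big1 // => i _; apply: powp0. Qed.
Lemma trF_opp (x : F) : trF p f (- x) = - trF p f x.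
Proof. by apply/eqP; rewrite -addr_eq0 -trF_add addNr trF0. Qed.
Lemma trF_sub (x y : F) : trF p f (x - y) = trF p f x - trF p f y.
Proof. by rewrite trF_add trF_opp. Qed.
Lemma trFq_add (x y : F) : trFq p f (x + y) = trFq p f x + trFq p f y.
Proof. by rewrite /trFq -big_split; apply: eq_bigr => i _; apply: powp_add. Qed.
Lemma trFq0 : trFq p f (0 : F) = 0.
Proof. by rewrite /trFq big1 // => i _; apply: powp0. Qed.
Lemma trFq_opp (x : F) : trFq p f (- x) = - trFq p f x.
Proof. by apply/eqP; rewrite -addr_eq0 -trFq_add addNr trFq0. Qed.

Lemma trF_split (x : F) : trF p f x = trFq p f x + trFq p f (s x).
Proof.
rewrite /trF /trFq mul2n -addnn big_split_ord /=; congr (_ + _).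
by apply: eq_bigr => i _; rewrite sE -exprM -expnD.
Qed.

Lemma trF_s (x : F) : trF p f (s x) = trF p f x.
Proof. by rewrite !trF_split ssK addrC. Qed.

Definition pk (y : F) : 'I_p :=
  odflt (Ordinal (prime_gt0 pp)) [pick k : 'I_p | (k%:R : F) == y].

Lemma ofFp_pk y : ofFp p y = (pk y : nat)%:Q / p%:Q.
Proof. by rewrite /ofFp /pk; case: pickP => //= _; rewrite mul0r. Qed.

Lemma pkE y : Fp y -> ((pk y : nat)%:R : F) = y.
Proof.
case=> z ->; rewrite /pk; case: pickP => [k /eqP // | H]; exfalso.
have p0 : (0 < p%:Z)%R by rewrite ltz_nat prime_gt0.
have hk : (`|(z %% p)%Z|%N < p)%N.
  by rewrite -ltz_nat gez0_abs ?modz_ge0 ?ltz_pmod // gt_eqF.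
have := H (Ordinal hk); rewrite /= pmulrn.
rewrite gez0_abs ?modz_ge0 ?gt_eqF //.
move/negbT/negP; apply; apply/eqP.
rewrite /modz intrB intrM.
by rewrite (_ : (p%:Z)%:~R = 0 :> F) ?mulr0 ?subr0 // -pmulrn (pcharf0 pch).
Qed.

Lemma ofFp_int (z : int) : ofFp p (z%:~R : F) =QZ z%:~R / p%:R.
Proof.
rewrite ofFp_pk; set k := pk _.
have hk : ((k : nat)%:R : F) = z%:~R by apply: pkE; exists z.
have : (p %| (k%:Z - z))%Z.
  by rewrite (dvdz_pcharf pch) intrB -pmulrn hk subrr.
case/dvdzP=> m hm.
rewrite /eqQZ.
have -> : (k : nat)%:Q / p%:Q - z%:~R / p%:R = (k%:Z - z)%:~R / p%:R.
  by rewrite intrB mulrBl.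
rewrite hm intrM -pmulrn mulfK; first by apply/intrP; exists m.
by rewrite pnatr_eq0 -lt0n prime_gt0.
Qed.

Lemma ofFp_add a b : Fp a -> Fp b -> ofFp p (a + b) =QZ ofFp p a + ofFp p b.
Proof.
move=> [x ->] [y ->]; rewrite -intrD.
apply: eqQZ_trans (ofFp_int _) _.
apply: eqQZ_sym; apply: eqQZ_trans (eqQZ_add (ofFp_int x) (ofFp_int y)) _.
by apply: eqQZ_eq; rewrite intrD mulrDl.
Qed.

Lemma ofFp_opp a : Fp a -> ofFp p (- a) =QZ - ofFp p a.
Proof.
move=> [x ->]; rewrite -intrN.
apply: eqQZ_trans (ofFp_int _) _.
apply: eqQZ_sym; apply: eqQZ_trans (eqQZ_opp (ofFp_int x)) _.
by apply: eqQZ_eq; rewrite intrN mulNr.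
Qed.

Lemma ofFp_sub a b : Fp a -> Fp b -> ofFp p (a - b) =QZ ofFp p a - ofFp p b.
Proof.
move=> ha hb; apply: eqQZ_trans (ofFp_add ha (Fp_opp hb)) _.
by apply: eqQZ_add (eqQZ_refl _) (ofFp_opp hb).
Qed.

Lemma ofFp0 : ofFp p (0 : F) =QZ 0.
Proof.
apply: eqQZ_trans (ofFp_int 0) _; by rewrite mul0r; apply: eqQZ_refl.
Qed.

Lemma ofFp_eq0 a : Fp a -> ofFp p a =QZ 0 -> a = 0.
Proof.
move=> [z ->] h.
have := eqQZ_trans (eqQZ_sym (ofFp_int z)) h.
rewrite /eqQZ subr0 => /intrP [m hm].
have pn0 : (p%:R : rat) != 0 by rewrite pnatr_eq0 -lt0n prime_gt0.
have : z = (m * p%:Z)%R.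
  apply: (@intr_inj rat); rewrite intrM -hm -pmulrn divfK //.
move=> ->; by rewrite intrM -pmulrn (pcharf0 pch) mulr0.
Qed.

Lemma ofFp_sum (I : Type) (r : seq I) (P : pred I) (g : I -> F) :
  (forall i, P i -> Fp (g i)) ->
  ofFp p (\sum_(i <- r | P i) g i) =QZ \sum_(i <- r | P i) ofFp p (g i).
Proof.
move=> h; elim: r => [|a r IH]; first by rewrite !big_nil; apply: ofFp0.
rewrite !big_cons; case: ifP => // Pa.
apply: eqQZ_trans (ofFp_add (h a Pa) (Fp_sum r h)) _.
exact: eqQZ_add (eqQZ_refl _) IH.
Qed.

Lemma ofFp_mulz (k : int) a : Fp a -> ofFp p (a *~ k) =QZ k%:~R * ofFp p a.
Proof.
move=> [x ->]; rewrite -mulrzr -intrM.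
apply: eqQZ_trans (ofFp_int _) _.
apply: eqQZ_sym; apply: eqQZ_trans (eqQZ_mulz k (ofFp_int x)) _.
by apply: eqQZ_eq; rewrite intrM; ring.
Qed.



Lemma trF_nz : exists w : F, trF p f w != 0.
Proof.
case: (pickP (fun w : F => trF p f w != 0)) => [w hw | h]; first by exists w.
exfalso.
set m := (2 * f).-1.
have e2 : (2 * f)%N = m.+1 by rewrite prednK // muln_gt0.
have p1 : (1 < p)%N by apply: prime_gt1.
pose P : {poly F} := \sum_(i < m.+1) 'X^(p ^ i).
have hPe : forall w, P.[w] = trF p f w.
  by move=> w; rewrite /trF e2 horner_sum; apply: eq_bigr => i _; rewrite hornerXn.
have Pn0 : P != 0.
  apply/eqP => P0.
  have : P`_(p ^ m) = 1.
    rewrite coef_sum (bigD1 ord_max) //= coefXn eqxx big1 ?addr0 // => i hi.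
    rewrite coefXn eqn_exp2l //.
    case: eqP => // him; case/negP: hi; apply/eqP/val_inj => /=; exact: esym him.
  by rewrite P0 coef0 => /eqP; rewrite eq_sym oner_eq0.
have hs : (size P <= (p ^ m).+1)%N.
  apply: leq_trans (size_sum _ _ _) _.
  apply/bigmax_leqP => i _; rewrite size_polyXn ltnS leq_pexp2l ?prime_gt0 //.
  by rewrite -ltnS.
have := @max_poly_roots F P (enum F) Pn0.
have -> : all (root P) (enum F).
  by apply/allP => w _; rewrite /root hPe; move: (h w) => /= /negbFE.
rewrite enum_uniq -cardE => /(_ isT isT) hc.
have : (#|F| < (p ^ m).+1)%N by apply: leq_trans hc hs.
rewrite cardF -expnM mulnC e2 expnS.
have : (0 < p ^ m)%N by rewrite expn_gt0 prime_gt0.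
move: (p ^ m)%N => y; nia.
Qed.

Lemma trF_nondeg d : (forall x : F, trF p f (x * d) = 0) -> d = 0.
Proof.
move=> h; apply/eqP; case: eqP => // /eqP dn0.
case: trF_nz => w hw; move: hw; rewrite -(divfK dn0 w) h eqxx.
done.
Qed.

Definition chi (x : F) : rat := ofFp p (trF p f x).

Lemma chi_add x y : chi (x + y) =QZ chi x + chi y.
Proof. by rewrite /chi trF_add; apply: ofFp_add; apply: trF_Fp. Qed.
Lemma chi_opp x : chi (- x) =QZ - chi x.
Proof. by rewrite /chi trF_opp; apply: ofFp_opp; apply: trF_Fp. Qed.
Lemma chi_sub x y : chi (x - y) =QZ chi x - chi y.
Proof. by rewrite /chi trF_sub; apply: ofFp_sub; apply: trF_Fp. Qed.
Lemma chi0 : chi 0 =QZ 0.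
Proof. by rewrite /chi trF0; apply: ofFp0. Qed.
Lemma chi_eq0 x : chi x =QZ 0 -> trF p f x = 0.
Proof. by move=> h; apply: ofFp_eq0 => //; apply: trF_Fp. Qed.
Lemma chi_sum (I : Type) (r : seq I) (P : pred I) (g : I -> F) :
  chi (\sum_(i <- r | P i) g i) =QZ \sum_(i <- r | P i) chi (g i).
Proof.
rewrite /chi (big_morph _ trF_add trF0); apply: ofFp_sum => i _; exact: trF_Fp.
Qed.

Lemma chi_nondeg d : (forall x : F, chi (x * d) =QZ 0) -> d = 0.
Proof. by move=> h; apply: trF_nondeg => x; apply: chi_eq0. Qed.

Lemma addQZ_0 (d : F -> rat) : (forall x y, d (x + y) =QZ d x + d y) -> d 0 =QZ 0.
Proof.
move=> hd; have := hd 0 0; rewrite addr0 /eqQZ => h.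
by rewrite opprD addrA subrr add0r rpredN in h; rewrite subr0.
Qed.

Lemma addQZ_mulrn (d : F -> rat) y k : (forall x y, d (x + y) =QZ d x + d y) ->
  d y =QZ 0 -> d (y *+ k) =QZ 0.
Proof.
move=> hd hy; elim: k => [|k IH]; first by rewrite mulr0n; apply: addQZ_0.
rewrite mulrS; apply: eqQZ_trans (hd _ _) _.
by have := eqQZ_add hy IH; rewrite addr0.
Qed.

Lemma addQZ_Mn (d : F -> rat) y k : (forall x y, d (x + y) =QZ d x + d y) ->
  d (y *+ k) =QZ d y *+ k.
Proof.
move=> hd; elim: k => [|k IH]; first by rewrite !mulr0n; apply: addQZ_0.
rewrite !mulrS; apply: eqQZ_trans (hd _ _) _.
exact: eqQZ_add (eqQZ_refl _) IH.
Qed.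

Lemma addQZ_sum (d : F -> rat) (I : Type) (r : seq I) (P : pred I) (g : I -> F) :
  (forall x y, d (x + y) =QZ d x + d y) ->
  (forall i, P i -> d (g i) =QZ 0) -> d (\sum_(i <- r | P i) g i) =QZ 0.
Proof.
move=> hd hg; elim/big_ind: _ => //; first exact: addQZ_0.
move=> x y hx hy; apply: eqQZ_trans (hd _ _) _.
by have := eqQZ_add hx hy; rewrite addr0.
Qed.

Lemma kappa_ex (r : rat) : r *+ p \is a Num.int ->
  exists k : 'I_p, r - (k : nat)%:Q / p%:Q \is a Num.int.
Proof.
case/intrP => z hz.
have p0 : (0 < p%:Z)%R by rewrite ltz_nat prime_gt0.
have hk : (`|(z %% p)%Z|%N < p)%N.
  by rewrite -ltz_nat gez0_abs ?modz_ge0 ?ltz_pmod // gt_eqF.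
exists (Ordinal hk); rewrite /=.
have pn0 : (p%:R : rat) != 0 by rewrite pnatr_eq0 -lt0n prime_gt0.
have -> : r = z%:~R / p%:R by apply: (mulIf pn0); rewrite divfK // mulr_natr hz.
rewrite gez0_abs ?modz_ge0 ?gt_eqF //.
have -> : (z %% p)%Z%:Q = (z%:~R : rat) - ((z %/ p)%Z * p%:Z)%:~R.
  by rewrite /modz intrB.
rewrite intrM -pmulrn.
have -> : z%:~R / p%:R - (z%:~R - (z %/ p)%Z%:~R * p%:R) / (p%:Z)%:~R
  = (z %/ p)%Z%:~R :> rat.
  by rewrite -pmulrn; field.
by apply/intrP; eexists.
Qed.

Lemma chi_surj (g : F -> rat) : (forall x y, g (x + y) =QZ g x + g y) ->
  exists c, forall x, chi (c * x) =QZ g x.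
Proof.
move=> hg.
pose L := pPrimeCharType pch.
have [v2r lin bij] := pprimeChar_vectAxiom pch.
set n := logn p #|L| in v2r lin bij.
have v2rD : forall x y : F, v2r (x + y) = v2r x + v2r y.
  by move=> x y; have := lin 1 x y; rewrite !scale1r.
case: bij => r2v K1 K2.
have r2vD : forall a b, r2v (a + b) = r2v a + r2v b.
  move=> a b; apply: (can_inj K1); rewrite v2rD !K2 //.
have r2v0 : r2v 0 = 0.
  by apply: (addrI (r2v 0)); rewrite -r2vD !addr0.
have r2vMn : forall a k, r2v (a *+ k) = r2v a *+ k.
  move=> a; elim=> [|k IH]; first by rewrite !mulr0n.
  by rewrite !mulrS r2vD IH.
pose e (j : 'I_n) : F := r2v (delta_mx 0 j).
have dec : forall x : F, x = \sum_(j < n) e j *+ (v2r x 0 j : nat).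
  move=> x; transitivity (r2v (\sum_(j < n) v2r x 0 j *: delta_mx 0 j)).
    by rewrite -row_sum_delta K1.
  rewrite (big_morph _ r2vD r2v0); apply: eq_bigr => j _.
  by rewrite -[in LHS](natr_Zp (v2r x 0 j)) scaler_nat r2vMn.
have ext : forall d : F -> rat, (forall x y, d (x + y) =QZ d x + d y) ->
    (forall j, d (e j) =QZ 0) -> forall x, d x =QZ 0.
  move=> d hd hj x; rewrite (dec x); apply: addQZ_sum => // j _.
  exact: addQZ_mulrn.
have chiM : forall c x y, chi (c * (x + y)) =QZ chi (c * x) + chi (c * y).
  by move=> c x y; rewrite mulrDr; apply: chi_add.
pose Psi (c : F) : {ffun 'I_n -> 'I_p} := [ffun j => pk (trF p f (c * e j))].
have Psi_inj : injective Psi.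
  move=> c c' /ffunP hc; apply/eqP; rewrite -subr_eq0; apply/eqP.
  apply: chi_nondeg => x; rewrite mulrC.
  apply: (ext (fun x => chi ((c - c') * x))) => [y z|j]; first exact: chiM.
  have := hc j; rewrite !ffunE => /(congr1 (fun k : 'I_p => ((k : nat)%:R : F))).
  rewrite !pkE; try exact: trF_Fp.
  move=> ht; rewrite mulrBl /chi trF_sub ht subrr; exact: ofFp0.
have hcard : (#|{ffun 'I_n -> 'I_p}| <= #|F|)%N.
  by rewrite card_ffun !card_ord /n [X in (_ <= X)%N](card_pprimeChar pch).
have gp : forall x, g x *+ p \is a Num.int.
  move=> x; have h1 := addQZ_Mn x p hg.
  rewrite (mulrn_pchar pch) in h1.
  have := eqQZ_trans (eqQZ_sym h1) (addQZ_0 hg).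
  by rewrite /eqQZ subr0.
pose kap (r : rat) : 'I_p := odflt (Ordinal (prime_gt0 pp))
  [pick k : 'I_p | r - (k : nat)%:Q / p%:Q \is a Num.int].
have kapP : forall x, g x - (kap (g x) : nat)%:Q / p%:Q \is a Num.int.
  move=> x; rewrite /kap; case: pickP => [k // | H].
  by case: (kappa_ex (gp x)) => k hk; move: (H k) => /=; rewrite hk.
pose t : {ffun 'I_n -> 'I_p} := [ffun j => kap (g (e j))].
have : t \in codom Psi by apply: inj_card_onto.
case/codomP => c hc; exists c => x; apply: eqQZ_sym.
suff: g x - chi (c * x) =QZ 0 by rewrite /eqQZ subr0.
apply: (ext (fun x => g x - chi (c * x))).
  move=> y z; apply: eqQZ_trans (eqQZ_sub (hg y z) (chiM c y z)) _.
  by apply: eqQZ_eq; rewrite opprD addrACA.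
move=> j; rewrite /eqQZ subr0 /chi ofFp_pk.
have := congr1 (fun h : {ffun 'I_n -> 'I_p} => h j) hc; rewrite /= !ffunE => <-.
exact: kapP.
Qed.

Local Notation VV := (regskew s).
Local Notation RR := (Defs.skew s).

Lemma betaE (v w : VV) : beta_rho p f v w = chi (w.1 * v.2 - v.1 * w.2).
Proof. by []. Qed.
Lemma addVE (v w : VV) : v + w = (v.1 + w.1, v.2 + w.2) :> F * F.
Proof. by []. Qed.
Lemma oppVE (v : VV) : - v = (- v.1, - v.2) :> F * F.
Proof. by []. Qed.
Lemma zeroVE : (0 : VV) = (0, 0) :> F * F.
Proof. by []. Qed.
Lemma scaleVE (r : RR) (v : VV) : r *: v = (r.1 * v.1, r.1 * v.2 + r.2 * s v.1) :> F * F.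
Proof. by []. Qed.
Lemma mulRE (r v : RR) : r * v = (r.1 * v.1, r.1 * v.2 + r.2 * s v.1) :> F * F.
Proof. by []. Qed.
Lemma addRE (v w : RR) : v + w = (v.1 + w.1, v.2 + w.2) :> F * F.
Proof. by []. Qed.
Lemma zeroRE : (0 : RR) = (0, 0) :> F * F.
Proof. by []. Qed.

Lemma chi_eqtr x y : trF p f x = trF p f y -> chi x = chi y.
Proof. by rewrite /chi => ->. Qed.

Lemma antisym (v w : VV) : beta_rho p f v w =QZ beta_rho p f w (- v).
Proof.
apply: eqQZ_eq; rewrite !betaE; congr chi; rewrite /=; ring.
Qed.

Lemma isJ : is_J (@beta_rho p f F s) (@J_rho p f F s).
Proof.
move=> r v w; apply: eqQZ_eq; rewrite !betaE /J_rho /= -sE.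
apply: chi_eqtr.
have -> : w.1 * (r.1 * v.2 + r.2 * s v.1) - r.1 * v.1 * w.2
  = (w.1 * r.1 * v.2 - r.1 * v.1 * w.2) + w.1 * r.2 * s v.1 by ring.
have -> : r.1 * w.1 * v.2 - v.1 * (r.1 * w.2 + - s r.2 * s w.1)
  = (w.1 * r.1 * v.2 - r.1 * v.1 * w.2) + s (s v.1 * r.2 * w.1).
  by rewrite !rmorphM ssK; ring.
by rewrite !trF_add trF_s; congr (_ + trF p f _); ring.
Qed.

Lemma nondeg2 a b : (forall v : VV, chi (v.2 * a - v.1 * b) =QZ 0) -> a = 0 /\ b = 0.
Proof.
move=> h; split.
  apply: chi_nondeg => x; have := h ((0, x) : F * F); rewrite /=.
  by rewrite mul0r subr0.
have : - b = 0.
  apply: chi_nondeg => x; have := h ((x, 0) : F * F); rewrite /=.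
  by rewrite mul0r sub0r mulrN.
by move/eqP; rewrite oppr_eq0 => /eqP.
Qed.

Lemma chi_diff x y z : x - y = z -> chi x - chi y =QZ chi z.
Proof. move=> <-; apply: eqQZ_sym; exact: chi_sub. Qed.

Lemma pairE (v : VV) : v = (v.1, v.2) :> F * F.
Proof. by case: v. Qed.

Lemma biadd : biadditive (@beta_rho p f F s).
Proof.
split=> v v' w; rewrite !betaE.
  apply: eqQZ_trans (chi_add _ _); apply: eqQZ_eq; congr chi; rewrite /=; ring.
apply: eqQZ_trans (chi_add _ _); apply: eqQZ_eq; congr chi; rewrite /=; ring.
Qed.

Lemma beta_inj (v v' : VV) :
  (forall w, beta_rho p f v w =QZ beta_rho p f v' w) -> v = v'.
Proof.
move=> h.
have [h1 h2] : v'.1 - v.1 = 0 /\ v'.2 - v.2 = 0.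
  apply: nondeg2 => w.
  have e : (w.1 * v.2 - v.1 * w.2) - (w.1 * v'.2 - v'.1 * w.2)
         = w.2 * (v'.1 - v.1) - w.1 * (v'.2 - v.2) by ring.
  apply: eqQZ_trans (eqQZ_sym (chi_diff e)) _.
  by have := h w; rewrite !betaE /eqQZ subr0.
clear h; move: h1 h2; case: v => a b; case: v' => a' b' /=.
by move=> /subr0_eq -> /subr0_eq ->.
Qed.

Lemma beta_surj (g : VV -> rat) : (forall v w, g (v + w) =QZ g v + g w) ->
  exists v, forall w, beta_rho p f v w =QZ g w.
Proof.
move=> hg.
have [c1 h1] : exists c, forall x, chi (c * x) =QZ g ((x, 0) : VV).
  apply: chi_surj => x y.
  have -> : ((x + y, 0) : VV) = ((x, 0) : VV) + ((y, 0) : VV).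
    by rewrite addVE /= addr0.
  exact: hg.
have [c2 h2] : exists c, forall x, chi (c * x) =QZ g ((0, x) : VV).
  apply: chi_surj => x y.
  have -> : ((0, x + y) : VV) = ((0, x) : VV) + ((0, y) : VV).
    by rewrite addVE /= addr0.
  exact: hg.
exists ((- c2, c1) : VV) => w; rewrite betaE /=.
have -> : w.1 * c1 - - c2 * w.2 = c1 * w.1 + c2 * w.2 by ring.
apply: eqQZ_trans (chi_add _ _) _.
apply: eqQZ_trans (eqQZ_add (h1 _) (h2 _)) _.
apply: eqQZ_sym.
have ew : w = ((w.1, 0) : VV) + ((0, w.2) : VV).
  by rewrite addVE /= addr0 add0r; case: w.
rewrite {1}ew; exact: hg.
Qed.

Lemma beta_transp (r : RR) : exists s' : RR, forall v w : VV,
  beta_r (@beta_rho p f F s) r w v =QZ beta_r (@beta_rho p f F s) s' v w.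
Proof.
exists (- J_rho p f r) => v w; rewrite /beta_r.
apply: eqQZ_trans (antisym _ _) _.
apply: eqQZ_trans (isJ _ _ _) _.
by apply: eqQZ_eq; rewrite scalerN scaleNr.
Qed.

Lemma beta_r_inj (r r' : RR) :
  (forall v w : VV, beta_r (@beta_rho p f F s) r v w =QZ beta_r (@beta_rho p f F s) r' v w) ->
  r = r'.
Proof.
move=> h.
have e1 : forall t : RR, t *: (1 : VV) = (t : VV) by move=> t; apply: mulr1.
have [h1 h2] : r.1 - r'.1 = 0 /\ r.2 - r'.2 = 0.
  apply: nondeg2 => v.
  have e : (r.1 * v.2 - v.1 * r.2) - (r'.1 * v.2 - v.1 * r'.2)
         = v.2 * (r.1 - r'.1) - v.1 * (r.2 - r'.2) by ring.
  apply: eqQZ_trans (eqQZ_sym (chi_diff e)) _.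
  by have := h v 1; rewrite /beta_r !e1 !betaE /eqQZ subr0.
clear h e1; move: h1 h2; case: r => a b; case: r' => a' b' /=.
by move=> /subr0_eq -> /subr0_eq ->.
Qed.

Lemma admiss : admissible (@beta_rho p f F s).
Proof.
split; first exact: biadd.
split; first exact: beta_inj.
split; first by move=> g hg; apply: beta_surj.
split; first exact: beta_transp.
exact: beta_r_inj.
Qed.

Definition Nm (a : F) := a * s a.

Lemma phi0E (r : RR) (v : VV) :
  shiftQ (@phi0 p f F s) r v = ofFp p (trFq p f (Nm (r.1 * v.1))).
Proof. by rewrite /shiftQ /phi0 /= -sE. Qed.

Lemma NmFq a : s (Nm a) = Nm a.
Proof. by rewrite /Nm rmorphM ssK mulrC. Qed.

Lemma Fp_tqN a : Fp (trFq p f (Nm a)).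
Proof. exact: trFq_Fp (NmFq a). Qed.

Lemma trF_mulrn (x : F) n : trF p f (x *+ n) = trF p f x *+ n.
Proof.
elim: n => [|n IH]; first by rewrite !mulr0n trF0.
by rewrite !mulrS trF_add IH.
Qed.

Lemma trF_mulz (x : F) (k : int) : trF p f (x *~ k) = trF p f x *~ k.
Proof.
case: k => n; first by rewrite -!pmulrn trF_mulrn.
by rewrite NegzE !mulrNz trF_opp -!pmulrn trF_mulrn.
Qed.

Lemma chi_mulz x (k : int) : chi (x *~ k) =QZ k%:~R * chi x.
Proof. by rewrite /chi trF_mulz; apply: ofFp_mulz; apply: trF_Fp. Qed.

Lemma ofFp7 (A B C D E G H : F) : Fp A -> Fp B -> Fp C -> Fp D -> Fp E -> Fp G -> Fp H ->
  ofFp p A - ofFp p B - ofFp p C - ofFp p D + ofFp p E + ofFp p G + ofFp p H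
  =QZ ofFp p (A - B - C - D + E + G + H).
Proof.
move=> [zA ->] [zB ->] [zC ->] [zD ->] [zE ->] [zG ->] [zH ->].
apply: eqQZ_trans (eqQZ_add (eqQZ_add (eqQZ_add (eqQZ_sub (eqQZ_sub (eqQZ_sub
  (ofFp_int zA) (ofFp_int zB)) (ofFp_int zC)) (ofFp_int zD)) (ofFp_int zE))
  (ofFp_int zG)) (ofFp_int zH)) _.
have -> : (zA%:~R - zB%:~R - zC%:~R - zD%:~R + zE%:~R + zG%:~R + zH%:~R : F)
  = (zA - zB - zC - zD + zE + zG + zH)%:~R by rewrite !intrD !intrN.
apply: eqQZ_sym; apply: eqQZ_trans (ofFp_int _) _.
by apply: eqQZ_eq; rewrite !intrD !intrN; field; rewrite pnatr_eq0 -lt0n prime_gt0.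
Qed.

Lemma ofFp3 (A B C : F) : Fp A -> Fp B -> Fp C ->
  ofFp p A - ofFp p B - ofFp p C =QZ ofFp p (A - B - C).
Proof.
move=> [zA ->] [zB ->] [zC ->].
apply: eqQZ_trans (eqQZ_sub (eqQZ_sub (ofFp_int zA) (ofFp_int zB)) (ofFp_int zC)) _.
have -> : (zA%:~R - zB%:~R - zC%:~R : F) = (zA - zB - zC)%:~R by rewrite !intrD !intrN.
apply: eqQZ_sym; apply: eqQZ_trans (ofFp_int _) _.
by apply: eqQZ_eq; rewrite !intrD !intrN; field; rewrite pnatr_eq0 -lt0n prime_gt0.
Qed.

Lemma trFq_sub (x y : F) : trFq p f (x - y) = trFq p f x - trFq p f y.
Proof. by rewrite trFq_add trFq_opp. Qed.

Lemma quad_phi0 (r : RR) : Quad0 (shiftQ (@phi0 p f F s) r).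
Proof.
split.
  by rewrite phi0E /= mulr0 /Nm rmorph0 mulr0 trFq0; apply: ofFp0.
move=> x y z; rewrite !phi0E /=.
apply: eqQZ_trans (ofFp7 _ _ _ _ _ _ _) _; try exact: Fp_tqN.
rewrite -!trFq_sub -!trFq_add.
have -> : Nm (r.1 * (x.1 + y.1 + z.1)) - Nm (r.1 * (x.1 + y.1)) - Nm (r.1 * (x.1 + z.1))
  - Nm (r.1 * (y.1 + z.1)) + Nm (r.1 * x.1) + Nm (r.1 * y.1) + Nm (r.1 * z.1) = 0.
  by rewrite /Nm !rmorphM !rmorphD; ring.
by rewrite trFq0; apply: ofFp0.
Qed.

Local Notation Phi := (@Phi_rho p f F s).
Local Notation phit r := (shiftQ (@phi0 p f F s) r).

Lemma Phi_resp phi psi : (forall v, phi v =QZ psi v) -> Phi phi -> Phi psi.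
Proof.
move=> h [l hl]; exists l => v.
exact: eqQZ_trans (eqQZ_sym (h v)) (hl v).
Qed.

Lemma Phi_zero : Phi (fun _ => 0).
Proof. by exists [::] => v; rewrite big_nil; apply: eqQZ_refl. Qed.

Lemma Phi_sub phi psi : Phi phi -> Phi psi -> Phi (fun v => phi v - psi v).
Proof.
move=> [l1 h1] [l2 h2].
exists (l1 ++ map (fun t => (t.1, - t.2)) l2) => v.
rewrite big_cat big_map /=.
apply: eqQZ_trans (eqQZ_sub (h1 v) (h2 v)) _; apply: eqQZ_eq.
congr (_ + _); rewrite -sumrN; apply: eq_bigr => t _.
by rewrite intrN mulNr.
Qed.

Lemma Phi_quad phi : Phi phi -> Quad0 phi.
Proof.
move=> [l hl]; split.
  apply: eqQZ_trans (hl 0) _.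
  rewrite [X in _ =QZ X](_ : 0 = \sum_(t <- l) (0 : rat)); last by rewrite big1.
  apply: eqQZ_sum => t _; rewrite -[X in _ =QZ X](mulr0 (t.2)%:~R).
  by apply: eqQZ_mulz; case: (quad_phi0 t.1).
move=> x y z.
apply: eqQZ_trans (eqQZ_add (eqQZ_add (eqQZ_add (eqQZ_sub (eqQZ_sub (eqQZ_sub
  (hl _) (hl _)) (hl _)) (hl _)) (hl _)) (hl _)) (hl _)) _.
have e7 : forall F0 : RR * int -> VV -> rat,
  \sum_(t <- l) F0 t (x + y + z) - \sum_(t <- l) F0 t (x + y)
  - \sum_(t <- l) F0 t (x + z) - \sum_(t <- l) F0 t (y + z)
  + \sum_(t <- l) F0 t x + \sum_(t <- l) F0 t y + \sum_(t <- l) F0 t z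
  = \sum_(t <- l) (F0 t (x + y + z) - F0 t (x + y) - F0 t (x + z) - F0 t (y + z)
                 + F0 t x + F0 t y + F0 t z).
  by move=> F0; rewrite !big_split /= !sumrN.
rewrite (e7 (fun t v => (t.2)%:~R * phit t.1 v)) /=.
rewrite [X in _ =QZ X](_ : 0 = \sum_(t <- l) (0 : rat)); last by rewrite big1.
apply: eqQZ_sum => t _.
have -> : forall a b c d e g h : rat, (t.2)%:~R * a - (t.2)%:~R * b - (t.2)%:~R * c
    - (t.2)%:~R * d + (t.2)%:~R * e + (t.2)%:~R * g + (t.2)%:~R * h
    = (t.2)%:~R * (a - b - c - d + e + g + h).
  by move=> *; ring.
rewrite -[X in _ =QZ X](mulr0 (t.2)%:~R); apply: eqQZ_mulz.
by case: (quad_phi0 t.1) => _; apply.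
Qed.

Lemma Phi_shift phi (r : RR) : Phi phi -> Phi (shiftQ phi r).
Proof.
move=> [l hl]; exists (map (fun t => (t.1 * r, t.2)) l) => v.
rewrite big_map /shiftQ /=.
apply: eqQZ_trans (hl _) _; apply: eqQZ_eq.
by apply: eq_bigr => t _; rewrite /shiftQ scalerA.
Qed.

Lemma Phi_diag (r : RR) : Phi (diag_form (beta_r (@beta_rho p f F s) r)).
Proof.
exists [:: (((r.2 + 1, 0) : RR), (-1)%R); (((r.2, 0) : RR), 1%R); ((1 : RR), 1%R)] => v.
rewrite /diag_form /beta_r !big_cons big_nil !phi0E betaE /=.

rewrite /chi.
have -> : trF p f (r.1 * v.1 * v.2 - v.1 * (r.1 * v.2 + r.2 * s v.1))
  = - trFq p f (Nm ((r.2 + 1) * v.1)) + trFq p f (Nm (r.2 * v.1))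
    + trFq p f (Nm (1 * v.1)).
  have -> : r.1 * v.1 * v.2 - v.1 * (r.1 * v.2 + r.2 * s v.1) = - (r.2 * Nm v.1).
    by rewrite /Nm; ring.
  rewrite trF_opp trF_split -trFq_add -!trFq_opp -(trFq_add (- Nm _)) -trFq_add.
  congr trFq.
  by rewrite /Nm !rmorphM !rmorphD rmorph1 ssK; ring.
apply: eqQZ_trans (ofFp_add _ _) _.
- by apply: Fp_add; [apply: Fp_opp|]; apply: Fp_tqN.
- exact: Fp_tqN.
apply: eqQZ_trans (eqQZ_add (ofFp_add _ _) (eqQZ_refl _)) _.
- by apply: Fp_opp; apply: Fp_tqN.
- exact: Fp_tqN.
apply: eqQZ_trans (eqQZ_add (eqQZ_add (ofFp_opp _) (eqQZ_refl _)) (eqQZ_refl _)) _.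
- exact: Fp_tqN.
by apply: eqQZ_eq; rewrite /=; ring.
Qed.

Lemma Phi_lambda phi : Phi phi ->
  exists r : RR, forall v w : VV, lambdaQ phi v w =QZ beta_r (@beta_rho p f F s) r v w.
Proof.
move=> [l hl].
pose M := \sum_(t <- l) Nm (t.1.1) *~ t.2.
exists ((0, - M) : RR) => v w.
rewrite /lambdaQ /beta_r betaE /=.
apply: eqQZ_trans (eqQZ_sub (eqQZ_sub (hl _) (hl _)) (hl _)) _.
rewrite -!sumrB.
have -> : 0 * w.1 * v.2 - v.1 * (0 * w.2 + - M * s w.1)
   = \sum_(t <- l) (Nm t.1.1 * (v.1 * s w.1)) *~ t.2.
  transitivity (M * (v.1 * s w.1)); first by ring.
  by rewrite /M mulr_suml; apply: eq_bigr => t _; rewrite mulrzAl.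
apply: eqQZ_sym; apply: eqQZ_trans (chi_sum _ _ _) _.
apply: eqQZ_sum => t _.
apply: eqQZ_trans (chi_mulz _ _) _.
rewrite -!mulrBr; apply: eqQZ_mulz.
rewrite !phi0E addVE /=.
apply: eqQZ_sym; apply: eqQZ_trans (ofFp3 _ _ _) _; try exact: Fp_tqN.
rewrite -!trFq_sub /chi trF_split -trFq_add; apply: eqQZ_eq; congr (ofFp p (trFq p f _)).
by rewrite [s (Nm _ * _)]rmorphM NmFq /Nm !rmorphM !rmorphD ssK; ring.
Qed.

Lemma formring : form_ring (@beta_rho p f F s) Phi.
Proof.
split; first exact: admiss.
split; first exact: Phi_resp.
split; first exact: Phi_zero.
split; first exact: Phi_sub.
split; first exact: Phi_quad.
split; first by move=> phi r; apply: Phi_shift.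
split; first exact: Phi_diag.
exact: Phi_lambda.
Qed.

Local Notation bar := (@bar_rho p f F s).

Lemma barE (c : RR) : bar c = (s c.1, - c.2) :> F * F.
Proof. by rewrite /bar_rho -sE. Qed.

Lemma bar_mul (r c : RR) : bar (r * c) = bar c * bar r.
Proof.
rewrite /bar_rho -!sE /=; congr pair; rewrite /= ?rmorphM ?ssK; ring.
Qed.

Lemma snd_sum (I : Type) (r : seq I) (P : pred I) (g : I -> RR) :
  (\sum_(i <- r | P i) g i).2 = \sum_(i <- r | P i) (g i).2.
Proof. by apply: (big_morph (fun X : RR => X.2)). Qed.

Lemma fst_sum (I : Type) (r : seq I) (P : pred I) (g : I -> RR) :
  (\sum_(i <- r | P i) g i).1 = \sum_(i <- r | P i) (g i).1.
Proof. by apply: (big_morph (fun X : RR => X.1)). Qed.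

Lemma sum_beta N (x c : {ffun 'I_N -> VV}) :
  \sum_(i < N) beta_rho p f (x i) (c i) =QZ chi ((\sum_(i < N) (x i : RR) * bar (c i)).2).
Proof.
apply: eqQZ_sym; rewrite snd_sum; apply: eqQZ_trans (chi_sum _ _ _) _.
apply: eqQZ_eq; apply: eq_bigr => i _; rewrite betaE /bar_rho -sE /= ssK; congr chi; ring.
Qed.

Lemma dual_equiv N (C : {ffun 'I_N -> VV} -> Prop) : left_submodule C ->
  forall x : {ffun 'I_N -> VV}, (forall c, C c -> \sum_(i < N) beta_rho p f (x i) (c i) =QZ 0) <->
            @herm_dual p f F s N C x.
Proof.
move=> [_ [_ hsc]] x; split => h.
  move=> c hc.
  set S := \sum_(i < N) _.
  have [h1 h2] : - S.1 = 0 /\ - S.2 = 0.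
    apply: nondeg2 => v.
    have := h _ (hsc (v : RR) c hc).
    move/(eqQZ_trans (eqQZ_sym (sum_beta _ _))).
    have -> : \sum_(i < N) (x i : RR) * bar ([ffun i => (v : RR) *: (c i : VV)] i)
      = S * bar v.
      rewrite /S mulr_suml; apply: eq_bigr => i _.
      by rewrite ffunE bar_mul mulrA.
    by rewrite /= -sE ssK; congr (chi _ =QZ 0); ring.
  move/eqP: h1; move/eqP: h2; rewrite !oppr_eq0 => /eqP h2 /eqP h1.
  by move: h1 h2; case: S => a b /= -> ->.
move=> c hc; apply: eqQZ_trans (sum_beta _ _) _.
by rewrite h //; apply: chi0.
Qed.

Lemma self_phi0 N (C : {ffun 'I_N -> VV} -> Prop) (c : {ffun 'I_N -> VV}) :
  @herm_dual p f F s N C c -> C c -> \sum_(i < N) @phi0 p f F s (c i) =QZ 0.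
Proof.
move=> hd hc; have := congr1 (fun X : RR => X.1) (hd c hc); rewrite /= fst_sum => h0.
rewrite /phi0; under eq_bigr do rewrite -sE.
have hs := @ofFp_sum _ (index_enum 'I_N) xpredT (fun i => trFq p f ((c i).1 * s (c i).1)).
apply: eqQZ_trans (eqQZ_sym (hs _)) _.
  by move=> i _; apply: trFq_Fp; rewrite rmorphM ssK mulrC.
rewrite -(big_morph _ trFq_add trFq0).
have -> : \sum_(i < N) (c i).1 * s (c i).1 = 0.
  by rewrite -[RHS]h0; apply: eq_bigr => i _; rewrite /bar_rho -sE.
by rewrite trFq0; apply: ofFp0.
Qed.

Lemma codes N (C : {ffun 'I_N -> VV} -> Prop) : left_submodule C ->
  (code_of_type (@beta_rho p f F s) Phi C <-> (forall x, C x <-> @herm_dual p f F s N C x)).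
Proof.
move=> sub; split.
  move=> [_ [hC _]] x; rewrite hC; exact: dual_equiv.
move=> H; split; first exact: sub.
split.
  by move=> x; apply: iff_trans (H x) _; apply: iff_sym; apply: dual_equiv.
move=> c phi hc [l hl].
apply: eqQZ_trans (@eqQZ_sum _ (index_enum _) xpredT _ _ (fun i _ => hl (c i))) _.
rewrite exchange_big /=.
rewrite [X in _ =QZ X](_ : 0 = \sum_(t <- l) (0 : rat)); last by rewrite big1.
apply: eqQZ_sum => t _; rewrite -mulr_sumr -[X in _ =QZ X](mulr0 (t.2)%:~R).
apply: eqQZ_mulz.
have hc' := let: conj _ (conj _ h) := sub in h t.1 c hc.
have := self_phi0 ((H _).1 hc') hc'.
by under eq_bigr do rewrite ffunE.
Qed.

End Main.

Theorem mainTheorem8 (p f : nat) (F : finFieldType) (s : {rmorphism F -> F}) :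
  prime p -> (0 < f)%N -> #|F| = ((p ^ f) ^ 2)%N ->
  (forall x : F, s x = x ^+ (p ^ f)%N) ->
  [/\ form_ring (@beta_rho p f F s) (@Phi_rho p f F s),
      is_J (@beta_rho p f F s) (@J_rho p f F s),
      (forall v w : regskew s, beta_rho p f v w =QZ beta_rho p f w (- v)) &
      forall (N : nat) (C : {ffun 'I_N -> regskew s} -> Prop),
        left_submodule C ->
        (code_of_type (@beta_rho p f F s) (@Phi_rho p f F s) C <->
         (forall x, C x <-> @herm_dual p f F s N C x))].
Proof.
move=> pp fpos cardF sE; split.
- by apply: formring.
- by apply: isJ.
- by move=> v w; apply: antisym.
- by move=> N C sub; apply: codes.
Qed.
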